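(* Consider a single MapReduce step (as defined in the context) executed in the BSP model with $p$ PEs by the following two-superstep algorithm: in the first superstep each PE applies $\mu$ to its local input elements and sends each resulting pair $(k,v)\in B$ to PE $h(k)\in\{1,\dots,p\}$ for a hash function $h$; in the second superstep each PE assembles the received pairs into elements of $C$ (using a local hash table), applies $\rho$ to them, and whenever a call of $\rho$ produces more than one output element, sends all but one of these output elements to a uniformly random PE. Assume that the input multiset $A$ is randomly distributed over the PEs and that $h$ behaves like a truly random mapping. Then this implementation takes expected time $$O\!\left(\hat{w}\,\hat{o}\!\left(\frac{w}{\hat{w}},p\right)+L+g\,\hat{m}\,\hat{o}\!\left(\frac{m}{\hat{m}},p\right)\right).$$ In particular, the expected time is $$O\!\left(\frac{w}{p}+L+g\frac{m}{p}\right)\quad\text{if } w=\Omega(\hat{w}\,p\log p)\text{ and } m=\Omega(\hat{m}\,p\log p).$$ Moreover, the output multiset $D$ is randomly distributed over the PEs.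
   Context: A MapReduce step takes a multiset $A$ and a mapping function $\mu$ mapping each $a\in A$ to a multiset of key–value pairs; $B=\bigcup_{a\in A}\mu(a)\subseteq K\times V$; $C=\{(k,X): X=\{x:(k,x)\in B\}\neq\emptyset\}$; a reduction function $\rho$ applied to the elements of $C$ yields the output multiset $D$. Sizes are measured in machine words. $w$: total time to evaluate $\mu$ and $\rho$ on all inputs; $\hat{w}$: maximum time of a single call of $\mu$ or $\rho$; $m$: total number of machine words in $A,B,C,D$; $\hat{m}$: maximum number of machine words produced or consumed by a single call of $\mu$ or $\rho$. BSP model: computation proceeds in globally synchronized supersteps, each consisting of local computation followed by a message exchange; a superstep costs $w_x+L+hg$ where $w_x$ is the maximum local work of any PE, $h$ is the maximum number of machine words communicated by any PE, $L$ is the latency parameter and $g$ the gap parameter. $\hat{o}(b,p)$ denotes the expected maximum occupancy of a bin when $\lceil b\rceil$ balls are placed independently and uniformly at random into $p$ bins. *)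

(* Defs.v *)
From HB Require Import structures.
From mathcomp Require Import all_boot all_order all_algebra.
From mathcomp Require Import reals exp.
Set Implicit Arguments. Unset Strict Implicit. Unset Printing Implicit Defensive.
Import Order.TTheory GRing.Theory Num.Theory.

(* One MapReduce step.  The multiset A is given as a sequence (its order is  *)
(* irrelevant for everything below except for fixing an enumeration).        *)
Record mr_step := MRStep {
  tA : Type; tK : eqType; tV : Type; tD : Type;
  mu : tA -> seq (tK * tV);
  rho : tK -> seq tV -> seq tD;
  time_mu : tA -> nat;
  time_rho : tK -> seq tV -> nat;
  words_A : tA -> nat;
  words_B : tK -> tV -> nat;
  words_D : tD -> nat;
  input : seq tA
}.

Section MapReduce.
Variable S : mr_step.

Definition Bseq : seq (tK S * tV S) := flatten (map (@mu S) (input S)).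
(* the distinct keys, i.e. the index set of C *)
Definition keys : seq (tK S) := undup (map fst Bseq).
(* X such that (k, X) in C *)
Definition Xof (k : tK S) : seq (tV S) := [seq kv.2 | kv <- Bseq & kv.1 == k].
(* an element (k,X) of C is represented by its pairs (k,x), x in X *)
Definition words_C (k : tK S) : nat := \sum_(x <- Xof k) words_B k x.
Definition outs (k : tK S) : seq (tD S) := rho k (Xof k).
Definition Dseq : seq (tD S) := flatten (map outs keys).

Definition work_total : nat :=
  \sum_(a <- input S) time_mu a + \sum_(k <- keys) time_rho k (Xof k).
Definition work_max : nat :=
  maxn (\max_(a <- input S) time_mu a) (\max_(k <- keys) time_rho k (Xof k)).

Definition words_mu_call (a : tA S) : nat :=
  words_A a + \sum_(kv <- mu a) words_B kv.1 kv.2.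
Definition words_rho_call (k : tK S) : nat :=
  words_C k + \sum_(d <- outs k) words_D d.

Definition mem_total : nat :=
  \sum_(a <- input S) words_A a + \sum_(kv <- Bseq) words_B kv.1 kv.2
  + \sum_(k <- keys) words_C k + \sum_(d <- Dseq) words_D d.
Definition mem_max : nat :=
  maxn (\max_(a <- input S) words_mu_call a) (\max_(k <- keys) words_rho_call k).

(* Standing modelling assumption: a call of rho reads its whole input. *)
Definition rho_reads_input : Prop :=
  forall k, k \in keys -> words_C k <= time_rho k (Xof k).

(* global index of each element of D: (index of its key, rank among the
   outputs of that call of rho) *)
Definition Dpos : seq (nat * nat) :=
  flatten [seq [seq (tk.1, j) | j <- iota 0 (size (outs tk.2))]
          | tk <- zip (iota 0 (size keys)) keys].

Variable p : nat.

(* The random choices: placement of the input elements, the random hash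
   function on keys, and random destinations of output elements
   (the destination of the first output of each rho call is not used). *)
Definition Omega : finType :=
  ({ffun 'I_(size (input S)) -> 'I_p} * {ffun 'I_(size keys) -> 'I_p}
   * {ffun 'I_(size Dseq) -> 'I_p})%type.

Definition elA (j : 'I_(size (input S))) : tA S := tnth (in_tuple (input S)) j.
Definition elK (t : 'I_(size keys)) : tK S := tnth (in_tuple keys) t.
Definition elD (d : 'I_(size Dseq)) : tD S := tnth (in_tuple Dseq) d.

Definition fun_at n (f : {ffun 'I_n -> 'I_p}) (t : nat) : nat :=
  if insub t is Some i then val (f i) else 0.

Definition work1 (om : Omega) (i : 'I_p) : nat :=
  \sum_(j < size (input S) | om.1.1 j == i) time_mu (elA j).
Definition sent1 (om : Omega) (i : 'I_p) : nat :=
  \sum_(j < size (input S) | om.1.1 j == i)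
     \sum_(kv <- mu (elA j)) words_B kv.1 kv.2.
Definition recv1 (om : Omega) (i : 'I_p) : nat :=
  \sum_(t < size keys | om.1.2 t == i) words_C (elK t).

(* superstep 2: assembling C (hash table, linear in the received words)
   and applying rho; all but the first output of each call is sent *)
Definition work2 (om : Omega) (i : 'I_p) : nat :=
  \sum_(t < size keys | om.1.2 t == i)
     (words_C (elK t) + time_rho (elK t) (Xof (elK t))).
Definition sent2 (om : Omega) (i : 'I_p) : nat :=
  \sum_(t < size keys | om.1.2 t == i) \sum_(d <- behead (outs (elK t))) words_D d.
Definition recv2 (om : Omega) (i : 'I_p) : nat :=
  \sum_(d < size Dseq | ((nth (0, 0) Dpos d).2 != 0) && (om.2 d == i)) words_D (elD d).

Definition placeD (om : Omega) (d : 'I_(size Dseq)) : nat :=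
  let tj := nth (0, 0) Dpos d in
  if tj.2 == 0 then fun_at om.1.2 tj.1 else val (om.2 d).

Variable R : realType.
Variables (L g : R).

(* BSP cost: two supersteps, each w_x + L + h g *)
Definition bsp_time (om : Omega) : R :=
  ((\max_(i < p) work1 om i)%:R + L + g * (\max_(i < p) maxn (sent1 om i) (recv1 om i))%:R)
  + ((\max_(i < p) work2 om i)%:R + L + g * (\max_(i < p) maxn (sent2 om i) (recv2 om i))%:R).

Definition expected_time : R :=
  (\sum_(om : Omega) bsp_time om) / (#|{: Omega}|)%:R.

End MapReduce.

(* \hat o(b, p): expected maximum bin occupancy, ceil b balls into p bins *)
Definition ohat (R : realType) (b : R) (p : nat) : R :=
  let N := `|Num.ceil b|%N in
  (\sum_(f : {ffun 'I_N -> 'I_p}) (\max_(i < p) #|[pred j | f j == i]|)%:R)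
  / (p ^ N)%:R.

(* Main.v *)
Require Import Defs.
From HB Require Import structures.
From mathcomp Require Import all_boot all_order all_algebra.
From mathcomp Require Import reals exp.
From mathcomp Require Import sequences.
From mathcomp Require Import ring lra zify.
Import Order.TTheory GRing.Theory Num.Theory.
Set Implicit Arguments. Unset Strict Implicit. Unset Printing Implicit Defensive.

Definition load n p (c : 'I_n -> nat) (f : {ffun 'I_n -> 'I_p}) (i : 'I_p) : nat :=
  \sum_(j < n | f j == i) c j.
Definition Mx n p (c : 'I_n -> nat) (f : {ffun 'I_n -> 'I_p}) : nat :=
  \max_(i < p) load c f i.
Definition Esum n p (c : 'I_n -> nat) : nat :=
  \sum_(f : {ffun 'I_n -> 'I_p}) Mx c f.

Definition sw n (a b : 'I_n) (j : 'I_n) : 'I_n :=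
  if j == a then b else if j == b then a else j.

Lemma swK n (a b : 'I_n) : involutive (sw a b).
Proof.
move=> j; rewrite /sw.
case: (eqVneq j a) => [->|nja]; first by rewrite eqxx; case: (eqVneq b a) => [->|]; rewrite ?eqxx.
case: (eqVneq j b) => [->|njb]; first by rewrite eqxx.
by rewrite (negbTE nja) (negbTE njb).
Qed.

Lemma Esum_sw n p (a b : 'I_n) (c : 'I_n -> nat) :
  Esum p (fun j => c (sw a b j)) = Esum p c.
Proof.
rewrite /Esum [RHS](reindex_inj (h := fun f : {ffun 'I_n -> 'I_p} => [ffun j => f (sw a b j)])).
  apply: eq_bigr => f _; rewrite /Mx; apply: eq_bigr => i _.
  rewrite /load [RHS](reindex_inj (can_inj (swK a b))) /=.
  by apply: eq_bigl => j; rewrite ffunE swK.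
move=> f1 f2 /ffunP H; apply/ffunP => j.
by have := H (sw a b j); rewrite !ffunE swK.
Qed.

Lemma Esum_mono n p (c d : 'I_n -> nat) : (forall j, c j <= d j) ->
  Esum p c <= Esum p d.
Proof.
move=> H; apply: leq_sum => f _; apply/bigmax_leqP => i _.
apply: leq_trans (@leq_bigmax _ (fun i => load d f i) i); exact: leq_sum.
Qed.

Lemma Esum_push n p (c : 'I_n -> nat) (a b : 'I_n) (y al be : nat) :
  a != b -> c a = y + al -> c b = y + be ->
  Esum p c <= Esum p (fun j => if j == a then y + al + be else if j == b then y else c j).
Proof.
move=> nab ca cb.
set c' := (fun j => _).
have Hsw : Esum p (fun j => c' (sw a b j)) = Esum p c' by apply: Esum_sw.
have key : (al + be) * Esum p c <= al * Esum p c' + be * Esum p (fun j => c' (sw a b j)).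
  rewrite /Esum !big_distrr -big_split /=; apply: leq_sum => f _.
  rewrite /Mx.
  have [p0|p0] := posnP p.
    by subst p; rewrite !big_ord0 !muln0.
  have [i0 _ ->] := eq_bigmax_cond (fun i => load c f i) (A := predT) (ltac:(by rewrite card_ord)).
  have -> : (al + be) * load c f i0 = al * load c' f i0 + be * load (fun j => c' (sw a b j)) f i0.
    rewrite /load !big_distrr -big_split /=; apply: eq_bigr => j _.
    rewrite /c' /sw.
    have nba : b != a by rewrite eq_sym.
    case: (eqVneq j a) => [->|nja].
      rewrite ?(eqxx, negbTE nab, negbTE nba) ca; ring.
    case: (eqVneq j b) => [->|njb].
      rewrite ?(eqxx, negbTE nab, negbTE nba) cb; ring.
    rewrite ?(negbTE nja, negbTE njb); ring.
  apply: leq_add; apply: leq_mul => //; exact: (@leq_bigmax _ (fun i => load _ f i) i0).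
rewrite Hsw -mulnDl in key.
have [H0|] := posnP (al + be).
  move: H0 => /eqP; rewrite addn_eq0 => /andP[/eqP a0 /eqP b0].
  apply: Esum_mono => j; rewrite /c'.
  case: (eqVneq j a) => [->|nja]; first by rewrite ca; lia.
  case: (eqVneq j b) => [->|njb]; first by rewrite ?(eqxx, negbTE nab, negbTE nba) cb; lia.
  by [].
by move=> pos; rewrite leq_pmul2l in key.
Qed.

Lemma shift_sum n (F G : 'I_n -> nat) (a b : 'I_n) (u v : nat) :
  (forall j, F j + (if j == b then u else 0) = G j + (if j == a then v else 0)) ->
  \sum_j F j + u = \sum_j G j + v.
Proof.
move=> H.
have e : forall (k : 'I_n) w, \sum_j (if j == k then w else 0) = w.
  by move=> k w; rewrite -big_mkcond big_pred1_eq.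
rewrite -[u](e b) -[v](e a) -!big_split /=; exact: eq_bigr.
Qed.

Definition Psi n (c : 'I_n -> nat) := \sum_j c j * j.

Lemma push_step n p (c : 'I_n -> nat) (a b : 'I_n) (y al be W : nat) :
  a < b -> c a = y + al -> c b = y + be -> 0 < be -> y + al + be <= W ->
  (forall j, c j <= W) ->
  let c1 := fun j => if j == a then y + al + be else if j == b then y else c j in
  [/\ forall j, c1 j <= W, \sum_j c1 j = \sum_j c j, Esum p c <= Esum p c1
    & Psi c1 < Psi c].
Proof.
move=> ab ca cb be0 leW cW c1.
have nab : a != b by rewrite neq_ltn ab.
have nba : b != a by rewrite eq_sym.
split.
- move=> j; rewrite /c1; case: ifP => _ //; case: ifP => _ //; lia.
- apply/eqP; rewrite -(eqn_add2r be); apply/eqP.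
  apply: (shift_sum (a := a) (b := b)) => j; rewrite /c1.
  case: (eqVneq j a) => [->|nja]; first by rewrite ?(eqxx, negbTE nab, negbTE nba) ca; lia.
  case: (eqVneq j b) => [->|njb]; first by rewrite ?(eqxx, negbTE nab, negbTE nba) cb; lia.
  by [].
- exact: Esum_push.
- have : Psi c1 + be * b = Psi c + be * a.
    apply: (shift_sum (a := a) (b := b)) => j; rewrite /c1.
    case: (eqVneq j a) => [->|nja]; first by rewrite ?(eqxx, negbTE nab, negbTE nba) ca; ring.
    case: (eqVneq j b) => [->|njb]; first by rewrite ?(eqxx, negbTE nab, negbTE nba) cb; ring.
    by rewrite !addn0.
  have : be * a < be * b by rewrite ltn_pmul2l.
  lia.
Qed.

Definition packed n W (c : 'I_n -> nat) :=
  forall a b : 'I_n, a < b -> c a < W -> c b = 0.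

Lemma pack_aux n p W : forall m (c : 'I_n -> nat), Psi c <= m -> (forall j, c j <= W) ->
  exists c' : 'I_n -> nat, [/\ forall j, c' j <= W, \sum_j c' j = \sum_j c j,
     Esum p c <= Esum p c' & packed W c'].
Proof.
elim=> [|m IH] c Hm cW.
  exists c; split => // a b ab _.
  have : c b * b <= Psi c by rewrite /Psi (bigD1 b) //= leq_addr.
  move: Hm; rewrite leqn0 => /eqP ->; rewrite leqn0 muln_eq0 => /orP[/eqP //|/eqP b0].
  by move: ab; rewrite b0.
have [|] := boolP [exists a : 'I_n, exists b : 'I_n, (a < b) && (c a < W) && (0 < c b)]; last first.
  move=> /existsPn Hn; exists c; split => // a b ab caW.
  move: (Hn a) => /existsPn /(_ b); rewrite ab caW /= lt0n negbK => /eqP //.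
move=> /existsP[a /existsP[b /andP[/andP[ab caW] cb0]]].
have [le|gt] := leqP (c a + c b) W.
  have [H1 H2 H3 H4] := @push_step n p c a b 0 (c a) (c b) W ab erefl erefl cb0 le cW.
  have [c' [c'W c'S c'E c'P]] := IH _ (ltnSE (leq_trans H4 Hm)) H1.
  exists c'; split => //; [by rewrite c'S H2 | exact: leq_trans H3 _].
have cbW := cW b.
have [H1 H2 H3 H4] := @push_step n p c a b (c a + c b - W) (W - c b) (W - c a) W ab
   ltac:(lia) ltac:(lia) ltac:(lia) ltac:(lia) cW.
have [c' [c'W c'S c'E c'P]] := IH _ (ltnSE (leq_trans H4 Hm)) H1.
exists c'; split => //; [by rewrite c'S H2 | exact: leq_trans H3 _].
Qed.

Lemma sum_lt_ord n (j : nat) : j <= n -> \sum_(a < n) (a < j : nat) = j.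
Proof.
move=> jn.
rewrite -(big_mkord xpredT (fun a => (a < j : nat))) (big_cat_nat (leq0n j) jn) /=.
rewrite (eq_big_nat _ _ (F2 := fun _ => 1)); last by move=> i /andP[_ ->].
rewrite [X in _ + X](eq_big_nat _ _ (F2 := fun _ => 0)); last first.
  by move=> i /andP[ji _]; rewrite ltnNge ji.
by rewrite sum_nat_const_nat big1 // subn0 muln1 addn0.
Qed.

Lemma packed_bound n W T N (c : 'I_n -> nat) :
  (forall j, c j <= W) -> packed W c -> \sum_j c j <= T -> T <= N * W ->
  forall j, c j <= W * (j < N).
Proof.
move=> cW cP cT TN j.
have [c0|cpos] := posnP (c j); first by rewrite c0.
have Hlt : forall a : 'I_n, a < j -> c a = W.
  move=> a aj; apply/eqP; rewrite eqn_leq cW /= leqNgt; apply/negP => caW.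
  by move: (cP a j aj caW) cpos => ->.
have : \sum_(a < n) ((a < j : nat) * W + (a == j : nat) * c j) <= \sum_a c a.
  apply: leq_sum => a _.
  case: (ltngtP a j) => [aj|ja|/val_inj ->].
  - have -> : (a == j) = false by apply/eqP => e; rewrite e ltnn in aj.
    by rewrite (Hlt a aj) /= mul1n mul0n addn0.
  - have -> : (a == j) = false by apply/eqP => e; rewrite e ltnn in ja.
    by rewrite /= mul0n.
  - by rewrite eqxx /= mul0n mul1n.
rewrite big_split /= -big_distrl /= sum_lt_ord; last exact: ltnW (ltn_ord j).
rewrite -big_distrl /= (bigD1 j) //= eqxx big1 ?addn0 ?mul1n; last first.
  by move=> i /negbTE ->.
move=> H.
have H2 : j * W + c j <= T by exact: leq_trans H cT.
have : j * W < N * W by lia.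
rewrite ltn_mul2r => /andP[_ ->]; by rewrite muln1.
Qed.

Lemma marg N k p (G : {ffun 'I_N -> 'I_p} -> nat) :
  \sum_(f : {ffun 'I_(N + k) -> 'I_p}) G [ffun j => f (lshift k j)] = p ^ k * \sum_g G g.
Proof.
pose join (gh : {ffun 'I_N -> 'I_p} * {ffun 'I_k -> 'I_p}) : {ffun 'I_(N+k) -> 'I_p} :=
  [ffun i => match split i with inl j => gh.1 j | inr j => gh.2 j end].
pose spl (f : {ffun 'I_(N+k) -> 'I_p}) :=
  ([ffun j => f (lshift k j)], [ffun j => f (rshift N j)]).
have jl : forall gh j, join gh (lshift k j) = gh.1 j.
  by move=> gh j; rewrite ffunE (unsplitK (inl j)).
have jr : forall gh j, join gh (rshift N j) = gh.2 j.
  by move=> gh j; rewrite ffunE (unsplitK (inr j)).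
rewrite (reindex join); last first.
  exists spl => [[g h] _|f _].
    by congr pair; apply/ffunP => j; rewrite ffunE ?jl ?jr.
  apply/ffunP => i; rewrite ffunE /=.
  rewrite -{2}(splitK i); by case: (split i) => j /=; rewrite ffunE.
have E : forall gh, [ffun j => join gh (lshift k j)] = gh.1.
  by move=> gh; apply/ffunP => j; rewrite ffunE jl.
under eq_bigr => gh _ do rewrite E.
rewrite -(pair_bigA _ (fun g h => G g)) /=.
rewrite big_distrr /=; apply: eq_bigr => g _.
by rewrite sum_nat_const card_ffun !card_ord mulnC.
Qed.

Definition occ N p (g : {ffun 'I_N -> 'I_p}) : nat := \max_(i < p) #|[pred j | g j == i]|.

Lemma Esum_scale n p W (d : 'I_n -> nat) : Esum p (fun j => W * d j) <= W * Esum p d.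
Proof.
rewrite /Esum big_distrr; apply: leq_sum => f _; apply/bigmax_leqP => i _.
rewrite /load -big_distrr leq_mul2l; apply/orP; right.
exact: (@leq_bigmax _ (fun i => load d f i) i).
Qed.

Lemma ind_bound n p N :
  Esum p (fun j : 'I_n => (j < N : nat)) * p ^ N <= (\sum_(g : {ffun 'I_N -> 'I_p}) occ g) * p ^ n.
Proof.
have [le|lt] := leqP N n.
  have [k Hk] : exists k, n = N + k by exists (n - N); rewrite subnKC.
  subst n.
  have E : Esum p (fun j : 'I_(N + k) => (j < N : nat)) =
      \sum_(f : {ffun 'I_(N + k) -> 'I_p}) occ [ffun j => f (lshift k j)].
    apply: eq_bigr => f _; apply: eq_bigr => i _.
    rewrite /load big_split_ord /= [X in _ + X]big1; last first.
      by move=> j _; rewrite ltnNge leq_addr.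
    rewrite addn0 -sum1_card; apply: eq_big => j; first by rewrite inE ffunE.
    by rewrite ltn_ord.
  by rewrite E marg expnD; rewrite [p ^ N * _]mulnC mulnA [_ * p ^ k]mulnC.
have [k Hk] : exists k, N = n + k by exists (N - n); rewrite subnKC // ltnW.
subst N.
have E : Esum p (fun j : 'I_n => (j < n + k : nat)) = \sum_(f : {ffun 'I_n -> 'I_p}) occ f.
  apply: eq_bigr => f _; apply: eq_bigr => i _.
  rewrite /load -sum1_card; apply: eq_bigr => j _.
  by rewrite (leq_trans (ltn_ord j) (leq_addr _ _)).
rewrite E expnD [p ^ n * _]mulnC mulnA leq_mul2r; apply/orP; right.
rewrite mulnC -marg; apply: leq_sum => g _; apply/bigmax_leqP => i _.
apply: leq_trans (@leq_bigmax _ (fun i => #|[pred j | g j == i]|) i).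
rewrite -!sum1_card [X in _ <= X]big_split_ord /=.
apply: leq_trans (leq_addr _ _).
by apply: eq_leq; apply: eq_bigl => j; rewrite !inE ffunE.
Qed.

Lemma lemA_nat n p W T N (c : 'I_n -> nat) :
  (forall j, c j <= W) -> \sum_j c j <= T -> T <= N * W ->
  Esum p c * p ^ N <= W * (\sum_(g : {ffun 'I_N -> 'I_p}) occ g) * p ^ n.
Proof.
move=> cW cT TN.
have [c' [c'W c'S cE c'P]] := @pack_aux n p W (Psi c) c (leqnn _) cW.
have B := packed_bound c'W c'P (leq_trans (eq_leq c'S) cT) TN.
apply: (@leq_trans (W * Esum p (fun j : 'I_n => (j < N : nat)) * p ^ N)).
  rewrite leq_mul2r; apply/orP; right.
  apply: leq_trans cE _; apply: leq_trans (Esum_scale _ _ _).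
  exact: Esum_mono.
by rewrite -!mulnA leq_mul2l ind_bound orbT.
Qed.

Open Scope ring_scope.

Definition Em (R : realType) n p (c : 'I_n -> nat) : R := (Esum p c)%:R / (p ^ n)%:R.

Lemma Esum0 n p (c : 'I_n -> nat) : (forall j, c j = 0%N) -> Esum p c = 0%N.
Proof.
move=> c0; apply: big1 => f _; apply/eqP; rewrite -leqn0; apply/bigmax_leqP => i _.
by rewrite /load big1.
Qed.

Lemma Em_ge0 (R : realType) n p (c : 'I_n -> nat) : 0 <= Em R p c.
Proof. by rewrite /Em divr_ge0. Qed.

Lemma ohat_ge0 (R : realType) (b : R) p : 0 <= ohat b p.
Proof. by rewrite /ohat divr_ge0 // sumr_ge0. Qed.

Lemma lemA (R : realType) n p W T (c : 'I_n -> nat) : (0 < p)%N ->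
  (forall j, c j <= W)%N -> (\sum_j c j <= T)%N ->
  Em R p c <= W%:R * ohat (T%:R / W%:R) p.
Proof.
move=> p0 cW cT.
have [W0|Wpos] := posnP W.
  rewrite W0 mul0r /Em Esum0 ?mul0r // => j; apply/eqP; by rewrite -leqn0 -W0.
set N := `|Num.ceil (T%:R / W%:R : R)|%N.
have TN : (T <= N * W)%N.
  rewrite -(ler_nat R) natrM.
  have Hc : (T%:R / W%:R : R) <= N%:R.
    rewrite /N natr_absz ger0_norm; first exact: ceil_ge.
    rewrite ceil_ge0; apply: lt_le_trans (divr_ge0 _ _) => //; by rewrite ltrN10.
  by rewrite -(@ler_pdivrMr _ W%:R) // ltr0n.
have H := lemA_nat p cW cT TN.
rewrite /Em /ohat -/N -natr_sum.
have pn : 0 < (p ^ n)%:R :> R by rewrite ltr0n expn_gt0 p0.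
have pN : 0 < (p ^ N)%:R :> R by rewrite ltr0n expn_gt0 p0.
rewrite ler_pdivrMr // mulrA mulrAC ler_pdivlMr //.
by rewrite -!natrM ler_nat.
Qed.


Lemma expR_le_small (R : realType) (u : R) : 0 <= u -> u <= 1/2 -> expR u <= 1 + 2 * u.
Proof.
move=> u0 u1.
have h1 : 1 - u <= expR (- u) by have := expR_ge1Dx (- u).
have h2 : expR u * (1 - u) <= 1.
  rewrite -[X in _ <= X](expRxMexpNx_1 u); apply: ler_wpM2l; [exact: expR_ge0 | exact: h1].
have h3 := expR_ge0 u.
nra.
Qed.

Lemma ln_le_sub1 (R : realType) (y : R) : 0 < y -> ln y <= y - 1.
Proof.
move=> y0; have := expR_ge1Dx (ln y); rewrite lnK ?posrE //; lra.
Qed.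

Lemma sum_ffun_const (R : realType) n p (x : R) :
  \sum_(f : {ffun 'I_n -> 'I_p}) x = x * (p ^ n)%:R.
Proof. by rewrite sumr_const card_ffun !card_ord mulr_natr. Qed.

Lemma sum_ln_le (R : realType) n p (X : {ffun 'I_n -> 'I_p} -> R) :
  (0 < p)%N -> (forall f, 0 < X f) ->
  \sum_f ln (X f) <= (p ^ n)%:R * ln ((\sum_f X f) / (p ^ n)%:R).
Proof.
move=> p0 Xpos.
have pn : 0 < (p ^ n)%:R :> R by rewrite ltr0n expn_gt0 p0.
set A := (\sum_f X f) / (p ^ n)%:R.
have S0 : 0 < \sum_f X f.
  have f0 : {ffun 'I_n -> 'I_p} := [ffun=> Ordinal p0].
  rewrite (bigD1 f0) //=.
  have : 0 <= \sum_(f | f != f0) X f by rewrite sumr_ge0 // => f _; exact: ltW.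
  have := Xpos f0; lra.
have A0 : 0 < A by rewrite /A divr_gt0.
have H : forall f, ln (X f) <= ln A + (X f / A - 1).
  move=> f; have := ln_le_sub1 (divr_gt0 (Xpos f) A0).
  rewrite ln_div ?posrE //; lra.
apply: le_trans (ler_sum _ (fun f _ => H f)) _.
rewrite big_split /= sumrB -mulr_suml sum_ffun_const sum_ffun_const.
have -> : (\sum_f X f) / A = (p ^ n)%:R.
  by rewrite /A invf_div mulrCA divff ?mulr1 // lt0r_neq0.
by rewrite mul1r subrr addr0 mulrC.
Qed.

Lemma sum_if_eq (R : realType) p (i : 'I_p) (e : R) :
  \sum_(k < p) (if k == i then e else 1) = p%:R + (e - 1).
Proof.
rewrite (eq_bigr (fun k => 1 + (if k == i then e - 1 else 0))); last first.
  by move=> k _; case: ifP => _; rewrite ?addr0 // addrC subrK.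
rewrite big_split /= -big_mkcond big_pred1_eq sumr_const card_ord.
by [].
Qed.

Lemma stepX (R : realType) n p (c : 'I_n -> nat) (t : R) (i : 'I_p) (T : nat) :
  (0 < p)%N -> 0 < t -> (forall j, t * (c j)%:R <= 1/2) -> (\sum_j c j <= T)%N ->
  \sum_(f : {ffun 'I_n -> 'I_p}) expR (t * (load c f i)%:R)
    <= (p ^ n)%:R * expR (2 * t * T%:R / p%:R).
Proof.
move=> p0 t0 tc cT.
have pR : 0 < p%:R :> R by rewrite ltr0n.
have E : forall f : {ffun 'I_n -> 'I_p}, expR (t * (load c f i)%:R) =
    \prod_j (if f j == i then expR (t * (c j)%:R) else 1).
  move=> f; rewrite /load natr_sum mulr_sumr expR_sum.
  by rewrite big_mkcond.
under eq_bigr => f _ do rewrite E.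
rewrite -(bigA_distr_bigA (fun j (k : 'I_p) => if k == i then expR (t * (c j)%:R) else 1)) /=.
under eq_bigr => j _ do rewrite sum_if_eq.
apply: (@le_trans _ _ (\prod_(j < n) (p%:R * expR (2 * t * (c j)%:R / p%:R)))).
  apply: ler_prod => j _; apply/andP; split.
    have := expR_ge1Dx (t * (c j)%:R).
    have : 0 <= t * (c j)%:R by rewrite mulr_ge0 // ltW.
    have : 1 <= p%:R :> R by rewrite ler1n.
    lra.
  have h1 := expR_le_small (mulr_ge0 (ltW t0) (ler0n _ (c j))) (tc j).
  have h2 := expR_ge1Dx (2 * t * (c j)%:R / p%:R).
  have h3 : p%:R * (1 + 2 * t * (c j)%:R / p%:R) = p%:R + 2 * t * (c j)%:R.
    by rewrite mulrDr mulr1 mulrCA divff ?mulr1 // lt0r_neq0.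
  have h4 : p%:R * (1 + 2 * t * (c j)%:R / p%:R) <= p%:R * expR (2 * t * (c j)%:R / p%:R).
    by rewrite ler_pM2l.
  lra.
rewrite big_split /= prodr_const card_ord -expR_sum natrX.
rewrite ler_pM2l ?exprn_gt0 // ler_expR.
rewrite -mulr_suml ler_pM2r ?invr_gt0 // -mulr_sumr ler_pM2l ?mulr_gt0 //.
by rewrite -natr_sum ler_nat.
Qed.

Lemma lemB (R : realType) n p W T (c : 'I_n -> nat) : (0 < p)%N ->
  (forall j, c j <= W)%N -> (\sum_j c j <= T)%N ->
  Em R p c <= 2 * W%:R * ln p%:R + 2 * T%:R / p%:R.
Proof.
move=> p0 cW cT.
have pR : 0 < p%:R :> R by rewrite ltr0n.
have lnp0 : 0 <= ln (p%:R : R) by apply: ln_ge0; rewrite ler1n.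
have pn : 0 < (p ^ n)%:R :> R by rewrite ltr0n expn_gt0 p0.
have [W0|Wpos] := posnP W.
  rewrite /Em Esum0; last by move=> j; apply/eqP; rewrite -leqn0 -W0.
  have h1 : 0 <= 2 * T%:R / p%:R :> R by rewrite divr_ge0 // mulr_ge0.
  have h2 : 0 <= 2 * W%:R * ln (p%:R : R) by rewrite mulr_ge0 // mulr_ge0.
  rewrite mul0r; lra.
have WR : 0 < W%:R :> R by rewrite ltr0n.
set t := (2 * W%:R : R)^-1.
have t0 : 0 < t by rewrite invr_gt0 mulr_gt0.
have tW : 2 * W%:R * t = 1 by rewrite divff // lt0r_neq0 // mulr_gt0.
have tc : forall j, t * (c j)%:R <= 1/2.
  move=> j; have : (c j)%:R <= W%:R :> R by rewrite ler_nat.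
  move=> h; rewrite /t mulrC ler_pdivrMr ?mulr_gt0 //; lra.
pose X (f : {ffun 'I_n -> 'I_p}) := \sum_(i < p) expR (t * (load c f i)%:R).
have Xpos : forall f, 0 < X f.
  move=> f; rewrite /X (bigD1 (Ordinal p0)) //=.
  have : 0 <= \sum_(i < p | i != Ordinal p0) expR (t * (load c f i)%:R).
    by rewrite sumr_ge0 // => i _; exact: expR_ge0.
  have := expR_gt0 (t * (load c f (Ordinal p0))%:R); lra.
have step1 : forall f, (Mx c f)%:R <= 2 * W%:R * ln (X f).
  move=> f; rewrite /Mx.
  have [i0 _ ->] := eq_bigmax_cond (fun i => load c f i) (A := predT) (ltac:(by rewrite card_ord)).
  have h : expR (t * (load c f i0)%:R) <= X f.
    rewrite /X (bigD1 i0) //= lerDl sumr_ge0 // => i _; exact: expR_ge0.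
  have h2 : t * (load c f i0)%:R <= ln (X f).
    by rewrite -(expRK (t * _)) ler_ln ?posrE ?expR_gt0 ?Xpos.
  have -> : (load c f i0)%:R = 2 * W%:R * (t * (load c f i0)%:R) :> R by rewrite mulrA tW mul1r.
  by rewrite ler_pM2l // mulr_gt0.
have step3 : \sum_f X f <= p%:R * ((p ^ n)%:R * expR (2 * t * T%:R / p%:R)).
  rewrite (_ : p%:R * _ = \sum_(i < p) ((p ^ n)%:R * expR (2 * t * T%:R / p%:R))); last first.
    by rewrite sumr_const card_ord mulr_natl.
  rewrite /X exchange_big /=.
  apply: ler_sum => i _; exact: stepX.
have SX : 0 < \sum_f X f.
  have f0 : {ffun 'I_n -> 'I_p} := [ffun=> Ordinal p0].
  rewrite (bigD1 f0) //=.
  have : 0 <= \sum_(f | f != f0) X f by rewrite sumr_ge0 // => f _; exact: ltW.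
  have := Xpos f0; lra.
rewrite /Em /Esum natr_sum ler_pdivrMr //.
apply: le_trans (ler_sum _ (fun f _ => step1 f)) _.
rewrite -mulr_sumr.
apply: le_trans (ler_wpM2l _ (sum_ln_le p0 Xpos)) _.
  by rewrite mulr_ge0 // ltW.
rewrite mulrCA [_ * (p ^ n)%:R]mulrC ler_pM2l //.
have H : ln ((\sum_f X f) / (p ^ n)%:R) <= ln p%:R + 2 * t * T%:R / p%:R.
  rewrite -[X in _ <= X + _](expRK (ln _)) lnK ?posrE // -[X in _ <= _ + X]expRK.
  rewrite -lnM ?posrE ?expR_gt0 // ler_ln ?posrE ?divr_gt0 ?mulr_gt0 ?expR_gt0 //.
  rewrite ler_pdivrMr //; apply: le_trans step3 _; rewrite le_eqVlt; apply/orP; left; apply/eqP; ring.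
apply: le_trans (ler_wpM2l _ H) _; first by rewrite mulr_ge0 // ltW.
have e : 2 * W%:R * (ln p%:R + 2 * t * T%:R / p%:R) = 2 * W%:R * ln p%:R + 2 * T%:R / p%:R.
  rewrite mulrDr; congr (_ + _).
  by rewrite /t; field; rewrite !lt0r_neq0.
rewrite e mulrC; lra.
Qed.


Lemma sum_fst (R : realType) (X Y : finType) (G : X -> R) :
  \sum_(om : X * Y) G om.1 = (\sum_x G x) * #|Y|%:R.
Proof.
rewrite -(pair_bigA _ (fun x y => G x)) /= mulr_suml; apply: eq_bigr => x _.
by rewrite sumr_const mulr_natr.
Qed.

Lemma sum_snd (R : realType) (X Y : finType) (G : Y -> R) :
  \sum_(om : X * Y) G om.2 = (\sum_y G y) * #|X|%:R.
Proof.
rewrite -(pair_bigA _ (fun x y => G y)) /= exchange_big /= mulr_suml; apply: eq_bigr => x _.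
by rewrite sumr_const mulr_natr.
Qed.

Section Spec.
Variable R : realType.
Variable S : mr_step.
Variable p : nat.
Hypothesis p0 : (0 < p)%N.

Local Notation nA := (size (input S)).
Local Notation nK := (size (keys S)).
Local Notation nD := (size (Dseq S)).

Definition c_w1 (j : 'I_nA) : nat := time_mu (elA j).
Definition c_w2 (t : 'I_nK) : nat := (words_C (elK t) + time_rho (elK t) (Xof (elK t)))%N.
Definition c_s1 (j : 'I_nA) : nat := \sum_(kv <- mu (elA j)) words_B kv.1 kv.2.
Definition c_r1 (t : 'I_nK) : nat := words_C (elK t).
Definition c_s2 (t : 'I_nK) : nat := \sum_(d <- behead (outs (elK t))) words_D d.
Definition c_r2 (d : 'I_nD) : nat :=
  if (nth (0, 0)%N (Dpos S) d).2 != 0%N then words_D (elD d) else 0%N.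

Lemma cardOmega : #|{: Omega S p}| = (p ^ nA * p ^ nK * p ^ nD)%N.
Proof. by rewrite !card_prod !card_ffun !card_ord. Qed.

Lemma cardOmega_gt0 : (0 < #|{: Omega S p}|)%N.
Proof. by rewrite cardOmega !muln_gt0 !expn_gt0 p0. Qed.

Lemma proj11 (c : 'I_nA -> nat) :
  \sum_(om : Omega S p) (Mx c om.1.1)%:R = Em R p c * #|{: Omega S p}|%:R.
Proof.
rewrite (@sum_fst R _ _ (fun xy : {ffun 'I_nA -> 'I_p} * {ffun 'I_nK -> 'I_p} => (Mx c xy.1)%:R)).
rewrite (@sum_fst R _ _ (fun x : {ffun 'I_nA -> 'I_p} => (Mx c x)%:R)) -natr_sum cardOmega /Em !card_ffun !card_ord.
rewrite -/(Esum p c) !natrM; field.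
by rewrite lt0r_neq0 // ltr0n expn_gt0 p0.
Qed.

Lemma proj12 (c : 'I_nK -> nat) :
  \sum_(om : Omega S p) (Mx c om.1.2)%:R = Em R p c * #|{: Omega S p}|%:R.
Proof.
rewrite (@sum_fst R _ _ (fun xy : {ffun 'I_nA -> 'I_p} * {ffun 'I_nK -> 'I_p} => (Mx c xy.2)%:R)).
rewrite (@sum_snd R _ _ (fun x : {ffun 'I_nK -> 'I_p} => (Mx c x)%:R)) -natr_sum cardOmega /Em !card_ffun !card_ord.
rewrite -/(Esum p c) !natrM; field.
by rewrite lt0r_neq0 // ltr0n expn_gt0 p0.
Qed.

Lemma proj2 (c : 'I_nD -> nat) :
  \sum_(om : Omega S p) (Mx c om.2)%:R = Em R p c * #|{: Omega S p}|%:R.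
Proof.
rewrite (@sum_snd R _ _ (fun x : {ffun 'I_nD -> 'I_p} => (Mx c x)%:R)) -natr_sum cardOmega /Em !card_prod !card_ffun !card_ord.
rewrite -/(Esum p c) !natrM; field.
by rewrite lt0r_neq0 // ltr0n expn_gt0 p0.
Qed.


Lemma max_maxn n (f1 f2 : 'I_n -> nat) :
  (\max_(i < n) maxn (f1 i) (f2 i) <= \max_(i < n) f1 i + \max_(i < n) f2 i)%N.
Proof.
apply/bigmax_leqP => i _.
rewrite geq_max; apply/andP; split; [exact: leq_trans (@leq_bigmax _ f1 i) (leq_addr _ _) | exact: leq_trans (@leq_bigmax _ f2 i) (leq_addl _ _)].
Qed.

Lemma recv2E (om : Omega S p) (i : 'I_p) : recv2 om i = load c_r2 om.2 i.
Proof. by rewrite /recv2 /load big_mkcondl. Qed.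

Lemma bsp_le (L g : R) (om : Omega S p) : 0 <= g ->
  bsp_time L g om <= (Mx c_w1 om.1.1)%:R + (Mx c_w2 om.1.2)%:R + 2 * L
    + g * ((Mx c_s1 om.1.1)%:R + (Mx c_r1 om.1.2)%:R + (Mx c_s2 om.1.2)%:R + (Mx c_r2 om.2)%:R).
Proof.
move=> g0; rewrite /bsp_time.
have h1 : ((\max_(i < p) maxn (sent1 om i) (recv1 om i))%:R <= (Mx c_s1 om.1.1)%:R + (Mx c_r1 om.1.2)%:R :> R).
  by rewrite -natrD ler_nat; exact: max_maxn.
have h2 : ((\max_(i < p) maxn (sent2 om i) (recv2 om i))%:R <= (Mx c_s2 om.1.2)%:R + (Mx c_r2 om.2)%:R :> R).
  rewrite -natrD ler_nat.
  under eq_bigr => i _ do rewrite recv2E.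
  exact: max_maxn.
have e1 : (\max_(i < p) work1 om i) = Mx c_w1 om.1.1 by [].
have e2 : (\max_(i < p) work2 om i) = Mx c_w2 om.1.2 by [].
rewrite e1 e2.
have h1' := ler_wpM2l g0 h1; have h2' := ler_wpM2l g0 h2.
lra.
Qed.

Lemma exp_bound (L g : R) : 0 <= g ->
  expected_time S p L g <= Em R p c_w1 + Em R p c_w2 + 2 * L
    + g * (Em R p c_s1 + Em R p c_r1 + Em R p c_s2 + Em R p c_r2).
Proof.
move=> g0.
have cO : 0 < #|{: Omega S p}|%:R :> R by rewrite ltr0n cardOmega_gt0.
rewrite /expected_time ler_pdivrMr //.
apply: le_trans (ler_sum _ (fun om _ => bsp_le L om g0)) _.
rewrite !big_split /= -!mulr_sumr !big_split /= !proj11 !proj12 proj2 sumr_const.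
rewrite ?cardOmega -mulr_natr.
by rewrite le_eqVlt; apply/orP; left; apply/eqP; ring.
Qed.


Lemma leq_sum_mem (T : eqType) (s : seq T) (F : T -> nat) x :
  x \in s -> (F x <= \sum_(y <- s) F y)%N.
Proof. by move=> xs; rewrite (big_rem x xs) /= leq_addr. Qed.

Lemma elK_in (t : 'I_nK) : elK t \in keys S.
Proof. exact: mem_tnth. Qed.
Lemma elD_in (d : 'I_nD) : words_D (elD d) \in map (@words_D S) (Dseq S).
Proof.
rewrite /elD (tnth_nth (elD d)) /= -(nth_map (elD d) 0%N) ?mem_nth ?size_map //.
Qed.

Lemma sum_elA (F : tA S -> nat) : (\sum_(j < nA) F (elA j) = \sum_(a <- input S) F a)%N.
Proof. by rewrite big_tnth. Qed.
Lemma sum_elK (F : tK S -> nat) : (\sum_(t < nK) F (elK t) = \sum_(k <- keys S) F k)%N.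
Proof. by rewrite big_tnth. Qed.
Lemma sum_elD (F : tD S -> nat) : (\sum_(d < nD) F (elD d) = \sum_(x <- Dseq S) F x)%N.
Proof. by rewrite big_tnth. Qed.

Lemma w1_bound (j : 'I_nA) : (c_w1 j <= work_max S)%N.
Proof.
rewrite /c_w1 /work_max; apply: leq_trans (leq_maxl _ _).
rewrite (big_tnth _ _ (input S)).
exact: (@leq_bigmax _ (fun j => time_mu (elA j)) j).
Qed.

Lemma w1_sum : (\sum_j c_w1 j <= work_total S)%N.
Proof. by rewrite /c_w1 sum_elA /work_total leq_addr. Qed.

Lemma rho_le_wmax k : k \in keys S -> (time_rho k (Xof k) <= work_max S)%N.
Proof.
move=> kin; rewrite /work_max; apply: leq_trans (leq_maxr _ _).
exact: (@leq_bigmax_seq _ _ (fun _ => true) (fun k => time_rho k (Xof k)) k kin).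
Qed.

Lemma w2_bound (t : 'I_nK) : rho_reads_input S -> (c_w2 t <= 2 * work_max S)%N.
Proof.
move=> rr; rewrite /c_w2.
have h1 := rr _ (elK_in t); have h2 := rho_le_wmax (elK_in t); lia.
Qed.

Lemma w2_sum : rho_reads_input S -> (\sum_j c_w2 j <= 2 * work_total S)%N.
Proof.
move=> rr; rewrite /c_w2 big_split /= !sum_elK.
have : (\sum_(k <- keys S) words_C k <= \sum_(k <- keys S) time_rho k (Xof k))%N.
  rewrite big_seq_cond [X in (_ <= X)%N]big_seq_cond; apply: leq_sum => k /andP[kin _].
  exact: rr.
rewrite (sum_elK (fun k => time_rho k (Xof k))) /work_total; lia.
Qed.

Lemma words_mu_le (j : 'I_nA) : (words_mu_call (elA j) <= mem_max S)%N.
Proof.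
rewrite /mem_max; apply: leq_trans (leq_maxl _ _).
rewrite (big_tnth _ _ (input S)).
exact: (@leq_bigmax _ (fun j => words_mu_call (elA j)) j).
Qed.

Lemma words_rho_le k : k \in keys S -> (words_rho_call k <= mem_max S)%N.
Proof.
move=> kin; rewrite /mem_max; apply: leq_trans (leq_maxr _ _).
exact: (@leq_bigmax_seq _ _ (fun _ => true) (@words_rho_call S) k kin).
Qed.

Lemma s1_bound (j : 'I_nA) : (c_s1 j <= mem_max S)%N.
Proof.
apply: leq_trans (words_mu_le j).
by rewrite /c_s1 /words_mu_call leq_addl.
Qed.

Lemma sumB : (\sum_(a <- input S) \sum_(kv <- mu a) words_B kv.1 kv.2
   = \sum_(kv <- Defs.Bseq S) words_B kv.1 kv.2)%N.
Proof. by rewrite /Defs.Bseq big_flatten big_map. Qed.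

Lemma sumD : (\sum_(k <- keys S) \sum_(d <- outs k) words_D d = \sum_(d <- Dseq S) words_D d)%N.
Proof. by rewrite /Dseq big_flatten big_map. Qed.

Lemma s1_sum : (\sum_j c_s1 j <= mem_total S)%N.
Proof.
rewrite /c_s1 (sum_elA (fun a => \sum_(kv <- mu a) words_B kv.1 kv.2)) sumB /mem_total; lia.
Qed.

Lemma r1_bound (t : 'I_nK) : (c_r1 t <= mem_max S)%N.
Proof.
apply: leq_trans (words_rho_le (elK_in t)).
by rewrite /c_r1 /words_rho_call leq_addr.
Qed.

Lemma r1_sum : (\sum_j c_r1 j <= mem_total S)%N.
Proof. rewrite /c_r1 (sum_elK (fun k => words_C k)) /mem_total; lia. Qed.

Lemma behead_le (k : tK S) : (\sum_(d <- behead (outs k)) words_D d <= \sum_(d <- outs k) words_D d)%N.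
Proof. by case: (outs k) => [|x s] //=; rewrite big_cons leq_addl. Qed.

Lemma s2_bound (t : 'I_nK) : (c_s2 t <= mem_max S)%N.
Proof.
apply: leq_trans (words_rho_le (elK_in t)).
by rewrite /c_s2 /words_rho_call (leq_trans (behead_le _)) // leq_addl.
Qed.

Lemma s2_sum : (\sum_j c_s2 j <= mem_total S)%N.
Proof.
apply: (@leq_trans (\sum_(t < nK) \sum_(d <- outs (elK t)) words_D d)).
  by apply: leq_sum => t _; exact: behead_le.
rewrite (sum_elK (fun k => \sum_(d <- outs k) words_D d)) sumD /mem_total; lia.
Qed.

Lemma r2_bound (d : 'I_nD) : (c_r2 d <= mem_max S)%N.
Proof.
rewrite /c_r2; case: ifP => // _.
have := elD_in d; rewrite /Dseq map_flatten -map_comp => /flattenP[s /mapP[k kin ->] din].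
apply: leq_trans (words_rho_le kin).
rewrite /words_rho_call; apply: leq_trans (leq_addl _ _).
rewrite -(big_map (@words_D S) xpredT id).
exact: (leq_sum_mem id din).
Qed.

Lemma r2_sum : (\sum_j c_r2 j <= mem_total S)%N.
Proof.
apply: (@leq_trans (\sum_(d < nD) words_D (elD d))).
  by apply: leq_sum => d _; rewrite /c_r2; case: ifP.
rewrite (sum_elD (fun x => words_D x)) /mem_total; lia.
Qed.

End Spec.


Lemma div22 (R : realType) (a b : nat) : (2 * a)%N%:R / (2 * b)%N%:R = a%:R / b%:R :> R.
Proof. by rewrite !natrM -mulf_div divff ?mul1r // pnatr_eq0. Qed.

Lemma part1 (R : realType) (S : mr_step) (p : nat) (L g : R) :
  (0 < p)%N -> 0 <= L -> 0 <= g -> rho_reads_input S ->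
  expected_time S p L g <=
  4 * ((work_max S)%:R * ohat ((work_total S)%:R / (work_max S)%:R) p
       + L + g * ((mem_max S)%:R * ohat ((mem_total S)%:R / (mem_max S)%:R) p)).
Proof.
move=> p0 L0 g0 rr.
apply: le_trans (exp_bound S p0 L g0) _.
set ow := ohat _ p; set om := ohat _ p.
have o1 : 0 <= ow by exact: ohat_ge0.
have o2 : 0 <= om by exact: ohat_ge0.
have hw1 := lemA R p0 (@w1_bound S) (w1_sum S).
have hw2 := lemA R p0 (fun t => w2_bound p0 t rr) (w2_sum p0 rr).
rewrite div22 natrM -/ow in hw2.
have hs1 := lemA R p0 (@s1_bound S) (s1_sum S p0).
have hr1 := lemA R p0 (@r1_bound S) (r1_sum S p0).
have hs2 := lemA R p0 (@s2_bound S) (s2_sum S p0).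
have hr2 := lemA R p0 (@r2_bound S) (r2_sum S p0).
rewrite -/ow in hw1; rewrite -/om in hs1 hr1 hs2 hr2.
set W := (work_max S)%:R in hw1 hw2 *; set M := (mem_max S)%:R in hs1 hr1 hs2 hr2 *.
have W0 : 0 <= W by rewrite /W ler0n.
have M0 : 0 <= M by rewrite /M ler0n.
have hsum : Em R p (c_s1 (S:=S)) + Em R p (c_r1 (S:=S)) + Em R p (c_s2 (S:=S)) + Em R p (c_r2 (S:=S))
   <= 4 * (M * om) by lra.
have hg := ler_wpM2l g0 hsum.
have : 0 <= W * ow by rewrite mulr_ge0.
have : 0 <= g * (M * om) by apply: mulr_ge0 => //; exact: mulr_ge0.
lra.
Qed.

Lemma part2 (R : realType) (c1 : R) : 0 < c1 ->
  forall (S : mr_step) (p : nat) (L g : R),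
       (0 < p)%N -> 0 <= L -> 0 <= g -> rho_reads_input S ->
       c1 * (work_max S)%:R * p%:R * ln p%:R <= (work_total S)%:R ->
       c1 * (mem_max S)%:R * p%:R * ln p%:R <= (mem_total S)%:R ->
       expected_time S p L g <=
       (8 * (1 + c1^-1)) * ((work_total S)%:R / p%:R + L + g * ((mem_total S)%:R / p%:R)).
Proof.
move=> c10 S p L g p0 L0 g0 rr Hw Hm.
apply: le_trans (exp_bound S p0 L g0) _.
have pR : 0 < p%:R :> R by rewrite ltr0n.
set lp := ln (p%:R : R) in Hw Hm *.
have lp0 : 0 <= lp by apply: ln_ge0; rewrite ler1n.
have hw1 := lemB R p0 (@w1_bound S) (w1_sum S).
have hw2 := lemB R p0 (fun t => w2_bound p0 t rr) (w2_sum p0 rr).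
have hs1 := lemB R p0 (@s1_bound S) (s1_sum S p0).
have hr1 := lemB R p0 (@r1_bound S) (r1_sum S p0).
have hs2 := lemB R p0 (@s2_bound S) (s2_sum S p0).
have hr2 := lemB R p0 (@r2_bound S) (r2_sum S p0).
rewrite !natrM in hw2.
set W := (work_max S)%:R in Hw hw1 hw2 *; set M := (mem_max S)%:R in Hm hs1 hr1 hs2 hr2 *.
set wt := (work_total S)%:R in Hw hw1 hw2 *; set mt := (mem_total S)%:R in Hm hs1 hr1 hs2 hr2 *.
set u := c1^-1.
have u0 : 0 < u by rewrite invr_gt0.
set a := wt / p%:R; set b := mt / p%:R.
have a0 : 0 <= a by rewrite divr_ge0 // ler0n.
have b0 : 0 <= b by rewrite divr_ge0 // ler0n.
have ea : 2 * wt / p%:R = 2 * a by rewrite /a; ring.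
have eb : 2 * mt / p%:R = 2 * b by rewrite /b; ring.
have ea2 : 2 * (2 * wt) / p%:R = 4 * a by rewrite /a; ring.
rewrite ?ea ?ea2 in hw1 hw2; rewrite ?eb in hs1 hr1 hs2 hr2.
rewrite -/lp in hw1 hw2 hs1 hr1 hs2 hr2.
have HX : W * lp <= u * a.
  have : c1 * (W * lp) * p%:R <= a * p%:R.
    by rewrite /a divfK ?lt0r_neq0 //; move: Hw; rewrite -!mulrA [lp * _]mulrC.
  rewrite ler_pM2r // => h.
  by rewrite /u -(ler_pM2l c10) [X in _ <= X]mulrA mulfV ?lt0r_neq0 // mul1r.
have HY : M * lp <= u * b.
  have : c1 * (M * lp) * p%:R <= b * p%:R.
    by rewrite /b divfK ?lt0r_neq0 //; move: Hm; rewrite -!mulrA [lp * _]mulrC.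
  rewrite ler_pM2r // => h.
  by rewrite /u -(ler_pM2l c10) [X in _ <= X]mulrA mulfV ?lt0r_neq0 // mul1r.
have hsum : Em R p (c_s1 (S:=S)) + Em R p (c_r1 (S:=S)) + Em R p (c_s2 (S:=S)) + Em R p (c_r2 (S:=S))
   <= 8 * (u * b) + 8 * b by lra.
have hg := ler_wpM2l g0 hsum.
have : 0 <= u * L by rewrite mulr_ge0 // ltW.
have : 0 <= u * (g * b) by apply: mulr_ge0; [exact: ltW | exact: mulr_ge0].
have : 0 <= g * b by rewrite mulr_ge0.
have : 0 <= u * a by rewrite mulr_ge0 // ltW.
have e : g * (8 * (u * b) + 8 * b) = 8 * (u * (g * b)) + 8 * (g * b) by ring.
rewrite e in hg.
have e2 : 8 * (1 + u) * (a + L + g * b) = 8 * a + 8 * (u * a) + 8 * L + 8 * (u * L) + 8 * (g * b) + 8 * (u * (g * b)) by ring.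
rewrite e2.
lra.
Qed.

Close Scope ring_scope.

Lemma card_pair (A B : finType) (PA : pred A) (PB : pred B) :
  #|[pred x : A * B | PA x.1 && PB x.2]| = #|PA| * #|PB|.
Proof.
rewrite -(cardsE PA) -(cardsE PB) -cardsX -cardsE; apply: eq_card => x.
by rewrite !inE.
Qed.

Lemma card_fixed (I : finType) p (Q : pred I) (v : I -> 'I_p) :
  #|[pred f : {ffun I -> 'I_p} | [forall i, Q i ==> (f i == v i)]]| = p ^ #|[predC Q]|.
Proof.
pose F := fun i => (if Q i then [pred k | k == v i] else [pred k | true]) : pred 'I_p.
have -> : #|[pred f : {ffun I -> 'I_p} | [forall i, Q i ==> (f i == v i)]]| = #|family F|.
  apply: eq_card => f; rewrite !inE; apply/forallP/familyP => H i.
    by have := H i; rewrite /F; case: (Q i) => //= /eqP ->; rewrite inE.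
  by have := H i; rewrite /F; case: (Q i) => //=; rewrite inE.
rewrite card_family.
rewrite foldrE big_image /=.
rewrite (eq_bigr (fun x => if ~~ Q x then p else 1)); last first.
  move=> x _; rewrite /F; case: (Q x) => /=.
    by rewrite (eq_card (B := pred1 (v x))) ?card1 // => k; rewrite !inE.
  by rewrite (eq_card (B := predT)) ?card_ord // => k; rewrite !inE.
rewrite -big_mkcond /= -prod_nat_const.
by apply: eq_bigl => x; rewrite !inE.
Qed.

Section Dp.
Variable S : mr_step.

Definition Dp (k : nat) (s : seq (tK S)) : seq (nat * nat) :=
  flatten [seq [seq (tk.1, j) | j <- iota 0 (size (outs tk.2))] | tk <- zip (iota k (size s)) s].

Lemma DposE : Dpos S = Dp 0 (keys S).
Proof. by []. Qed.

Lemma Dp_cons k x s : Dp k (x :: s) = [seq (k, j) | j <- iota 0 (size (outs x))] ++ Dp k.+1 s.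
Proof. by []. Qed.

Lemma size_Dp k s : size (Dp k s) = size (flatten (map (@outs S) s)).
Proof.
elim: s k => [|x s IH] k //.
by rewrite Dp_cons /= !size_cat size_map size_iota IH.
Qed.

Lemma mem_Dp k s x : x \in Dp k s -> k <= x.1 < k + size s.
Proof.
elim: s k => [|y s IH] k //.
rewrite Dp_cons mem_cat => /orP[/mapP[j _ ->]|/IH] /=.
  by rewrite leqnn addnS ltnS leq_addr.
by rewrite addSnnS => /andP[h1 h2]; rewrite h2 ltnW.
Qed.

Lemma uniq_Dp k s : uniq (Dp k s).
Proof.
elim: s k => [|y s IH] k //.
rewrite Dp_cons cat_uniq IH andbT map_inj_uniq ?iota_uniq //=; last first.
  by move=> a b [].
apply/hasPn => x /mem_Dp /andP[h _]; apply/mapP => [[j _ e]].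
by move: h; rewrite e /= ltnn.
Qed.

End Dp.

Lemma part3 (S : mr_step) (p : nat) : (0 < p)%N ->
  forall tau : {ffun 'I_(size (Dseq S)) -> 'I_p},
    (#|[pred om : Omega S p | [forall d, placeD om d == val (tau d)]]|
       * p ^ size (Dseq S))%N = #|{: Omega S p}|.
Proof.
move=> p0 tau.
set nD := size (Dseq S); set nK := size (keys S); set nA := size (input S).
have sz : size (Dpos S) = nD by rewrite DposE size_Dp.
have Ht : forall d : 'I_nD, (nth (0, 0)%N (Dpos S) d).1 < nK.
  move=> d; have : nth (0, 0)%N (Dpos S) d \in Dpos S by rewrite mem_nth // sz.
  by rewrite DposE => /mem_Dp /andP[_].
pose phi (d : 'I_nD) : 'I_nK := Ordinal (Ht d).
pose P (d : 'I_nD) : bool := (nth (0, 0)%N (Dpos S) d).2 == 0%N.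
have inj : forall d1 d2, P d1 -> P d2 -> phi d1 = phi d2 -> d1 = d2.
  move=> d1 d2; rewrite /P => /eqP h1 /eqP h2 /(congr1 val) /= e.
  have e2 : nth (0, 0)%N (Dpos S) d1 = nth (0, 0)%N (Dpos S) d2.
    by move: e h1 h2; case: (nth _ _ d1) => a b; case: (nth _ _ d2) => a' b' /= -> -> ->.
  apply: val_inj; apply/eqP; rewrite -(nth_uniq (0, 0)%N (s := Dpos S)) ?sz ?ltn_ord //; first by rewrite e2.
  by rewrite DposE uniq_Dp.
have place : forall (om : Omega S p) d,
    (placeD om d == val (tau d)) = (if P d then om.1.2 (phi d) == tau d else om.2 d == tau d).
  move=> om d; rewrite /placeD /P; case: ifP => _ //.
  have -> : (nth (0, 0)%N (Dpos S) d).1 = val (phi d) by [].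
  by rewrite /fun_at valK.
pose v (t : 'I_nK) : 'I_p :=
  if [pick d | P d && (phi d == t)] is Some d then tau d else Ordinal p0.
have vphi : forall d, P d -> v (phi d) = tau d.
  move=> d Pd; rewrite /v; case: pickP => [d' /andP[Pd' /eqP e]|/(_ d)].
    by rewrite (inj d' d Pd' Pd).
  by rewrite Pd eqxx.
pose HC (h : {ffun 'I_nK -> 'I_p}) := [forall t, (t \in phi @: [set d | P d]) ==> (h t == v t)].
pose RC (r : {ffun 'I_nD -> 'I_p}) := [forall d, (~~ P d) ==> (r d == tau d)].
have E : #|[pred om : Omega S p | [forall d, placeD om d == val (tau d)]]| =
         #|[pred om : Omega S p | [pred xy : {ffun 'I_nA -> 'I_p} * {ffun 'I_nK -> 'I_p} |
              predT xy.1 && HC xy.2] om.1 && RC om.2]|.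
  apply: eq_card => om; rewrite !inE.
  apply/forallP/andP => [H|[H1 /forallP H2] d].
    split.
      apply/forallP => t; apply/implyP => /imsetP[d]; rewrite inE => Pd ->.
      by have := H d; rewrite place Pd vphi.
    apply/forallP => d; apply/implyP => nPd.
    by have := H d; rewrite place (negbTE nPd).
  rewrite place; case: ifP => Pd.
    move: H1 => /forallP /(_ (phi d)); rewrite imset_f ?inE //= vphi //.
  by move: (H2 d); rewrite Pd.
rewrite E card_pair card_pair.
have cR : #|RC| = (p ^ #|P|)%N.
  rewrite /RC (card_fixed (fun d => ~~ P d) tau); congr (_ ^ _); apply: eq_card => d.
  by rewrite !inE negbK.
have cH : #|HC| = (p ^ #|[predC (phi @: [set d | P d])]|)%N.
  exact: (card_fixed (fun t => t \in phi @: [set d | P d]) v).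
have cI : #|phi @: [set d | P d]| = #|P|.
  rewrite card_in_imset ?cardsE //.
  by move=> d1 d2; rewrite !inE; exact: inj.
have cC := cardC (phi @: [set d | P d]).
rewrite cR cH cardOmega !card_ffun !card_ord.

rewrite -!expnD; congr (_ ^ _).
rewrite card_ord cI in cC.
move: cC; rewrite /nK /nD /nA; lia.
Qed.

Unset Implicit Arguments.
Local Open Scope ring_scope.

Theorem theorem4p1 (R : realType) :
  (* expected time O(\hat w \hat o(w/\hat w,p) + L + g \hat m \hat o(m/\hat m,p)) *)
  (exists C : R, 0 < C /\
     forall (S : mr_step) (p : nat) (L g : R),
       (0 < p)%N -> 0 <= L -> 0 <= g -> rho_reads_input S ->
       expected_time S p L g <=
       C * ((work_max S)%:R * ohat ((work_total S)%:R / (work_max S)%:R) p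
            + L
            + g * ((mem_max S)%:R * ohat ((mem_total S)%:R / (mem_max S)%:R) p)))
  /\
  (* expected time O(w/p + L + g m/p) if w = Omega(\hat w p log p) and
     m = Omega(\hat m p log p) *)
  (forall c1 : R, 0 < c1 ->
   exists C : R, 0 < C /\
     forall (S : mr_step) (p : nat) (L g : R),
       (0 < p)%N -> 0 <= L -> 0 <= g -> rho_reads_input S ->
       c1 * (work_max S)%:R * p%:R * ln p%:R <= (work_total S)%:R ->
       c1 * (mem_max S)%:R * p%:R * ln p%:R <= (mem_total S)%:R ->
       expected_time S p L g <=
       C * ((work_total S)%:R / p%:R + L + g * ((mem_total S)%:R / p%:R)))
  /\
  (* the output D is randomly distributed: the placement of the elements of D
     is uniformly distributed over all assignments of them to PEs *)
  (forall (S : mr_step) (p : nat), (0 < p)%N ->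
     forall tau : {ffun 'I_(size (Dseq S)) -> 'I_p},
       (#|[pred om : Omega S p | [forall d, placeD om d == val (tau d)]]|
          * p ^ size (Dseq S))%N = #|{: Omega S p}|).

Proof.
split; first by exists 4; split; [lra | exact: part1].
split.
  move=> c1 c10; exists (8 * (1 + c1^-1)); split; last exact: part2.
  have : 0 < c1^-1 by rewrite invr_gt0.
  lra.
exact: part3.
Qed.
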